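(* There exists an ASCM $\mathcal{M}^*$ over $\{\mathbf{V},\mathbf{I}\}$ whose causal diagram $\mathcal{G}$ is semi-Markovian (contains bidirected edges) such that no ASCM $\widehat{\mathcal{M}}$ in which Markovianity is enforced satisfies both (1) $P^{\widehat{\mathcal{M}}}(\mathbf{V},\mathbf{I})=P^{\mathcal{M}^*}(\mathbf{V},\mathbf{I})$ and (2) every feature counterfactual query induced by $\widehat{\mathcal{M}}$ lies in its optimal bound derived from $P^{\mathcal{M}^*}(\mathbf{V})$ and $\mathcal{G}$.
   Context: SCMs $\langle\mathbf{U},\mathbf{V},\mathcal{F},P(\mathbf{U})\rangle$, interventions $do(\mathbf{x})$ and counterfactual distributions $P^{\mathcal{M}}(\mathbf{y}_{\mathbf{x}},\dots)=\int\mathbf{1}[\mathbf{Y}_{\mathbf{x}}(\mathbf{u})=\mathbf{y},\dots]\,dP(\mathbf{u})$ are standard. The causal diagram has a directed edge $V_j\to V_k$ if $V_j$ is an argument of $f_{V_k}$ and a bidirected edge $V_j\leftrightarrow V_k$ if their exogenous arguments are not independent; a model is Markovian (causally sufficient) if its exogenous variables are mutually independent and each affects at most one endogenous variable, i.e., its diagram has no bidirected edges among the generative factors; semi-Markovian diagrams may have bidirected edges. An ASCM is an SCM $\langle\mathbf{U},\{\mathbf{V},\mathbf{I}\},\mathcal{F},P(\mathbf{U})\rangle$ with $\mathbf{U}=\{\mathbf{U}_0,\mathbf{U}_{\mathbf{I}}\}$, observed generative factors $\mathbf{V}$ (discrete finite domains) with mechanisms depending on $\mathbf{U}_0,\mathbf{V}$,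 and an $m$-dimensional image $\mathbf{I}=f_{\mathbf{I}}(\mathbf{V},\mathbf{U}_{\mathbf{I}})$ with $f_{\mathbf{I}}$ invertible w.r.t. $\mathbf{V}$. For $\mathbf{W},\mathbf{X}\subseteq\mathbf{V}$ and a value $\mathbf{x}'$, with $h^*_{\mathbf{W}}$ the inverse of the image mechanism of $\mathcal{M}^*$ w.r.t. $\mathbf{W}$, the feature counterfactual query of a model $\mathcal{M}$ at images $\mathbf{i},\mathbf{i}'$ is $\int\mathbf{1}[h^*_{\mathbf{W}}(\mathbf{i}^{(1)})=\mathbf{w},h^*_{\mathbf{W}}(\mathbf{i}^{(2)})=\mathbf{w}']\,dP^{\mathcal{M}}(\mathbf{i}^{(1)},\mathbf{i}^{(2)}_{\mathbf{x}'})$ with $\mathbf{w}=h^*_{\mathbf{W}}(\mathbf{i})$, $\mathbf{w}'=h^*_{\mathbf{W}}(\mathbf{i}')$; its optimal bound derived from $P(\mathbf{V})$ and $\mathcal{G}$ is the interval between the min and max of $P^{\mathcal{M}}(\mathbf{W}=\mathbf{w},\mathbf{W}_{\mathbf{x}'}=\mathbf{w}')$ over SCMs $\mathcal{M}$ over $\mathbf{V}$ compatible with $\mathcal{G}$ (restricted to $\mathbf{V}$) with $P^{\mathcal{M}}(\mathbf{V})=P(\mathbf{V})$. *)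

(* Defs.v *)
From HB Require Import structures.
From mathcomp Require Import all_boot all_order all_algebra.
From mathcomp Require Import all_classical all_reals all_analysis.

Set Implicit Arguments.
Unset Strict Implicit.
Unset Printing Implicit Defensive.

Import Order.TTheory GRing.Theory Num.Theory.
Local Open Scope classical_set_scope.
Local Open Scope ring_scope.

(* Generative factors V = {V_0, ..., V_(n-1)}, V_k with finite domain D k.  *)
Definition vals (n : nat) (D : 'I_n -> finType) := forall k : 'I_n, D k.

Definition mechs (n : nat) (D : 'I_n -> finType) (U : Type) :=
  forall k : 'I_n, vals D -> U -> D k.

Definition is_arg n (D : 'I_n -> finType) (U : Type) (f : mechs D U)
    (j k : 'I_n) : Prop :=
  exists (v v' : vals D) (u : U),
    (forall i, i != j -> v i = v' i) /\ f k v u <> f k v' u.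

Definition acyclic n (D : 'I_n -> finType) (U : Type) (f : mechs D U) : Prop :=
  exists rank : 'I_n -> nat, forall j k, is_arg f j k -> (rank j < rank k)%N.

Record SCM (n : nat) (D : 'I_n -> finType) (d : measure_display)
    (U : measurableType d) (R : realType) := MkSCM {
  scm_P : probability U R;
  scm_f : mechs D U;
  scm_f_meas : forall k (v : vals D) (a : D k),
      measurable [set u | scm_f k v u = a];
  scm_acyclic : acyclic scm_f
}.

(* only the components of x indexed by X are used.                     *)
Definition is_sol n (D : 'I_n -> finType) d (U : measurableType d) R
    (M : SCM D U R) (X : {set 'I_n}) (x : vals D) (u : U) (v : vals D) : Prop :=
  forall k, v k = if k \in X then x k else scm_f M k v u.

Definition is_obs n (D : 'I_n -> finType) d (U : measurableType d) R
    (M : SCM D U R) (u : U) (v : vals D) : Prop :=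
  forall k, v k = scm_f M k v u.

(* The exogenous argument of V_k, seen through the response function
   u |-> f_{V_k}(., u). *)
Definition resp n (D : 'I_n -> finType) d (U : measurableType d) R
    (M : SCM D U R) (k : 'I_n) (u : U) : vals D -> D k :=
  fun v => scm_f M k v u.

Definition exo_indep n (D : 'I_n -> finType) d (U : measurableType d) R
    (M : SCM D U R) (j k : 'I_n) : Prop :=
  forall (g : vals D -> D j) (h : vals D -> D k),
    scm_P M [set u | resp M j u = g /\ resp M k u = h] =
    (scm_P M [set u | resp M j u = g] * scm_P M [set u | resp M k u = h])%E.

Definition bidir n (D : 'I_n -> finType) d (U : measurableType d) R
    (M : SCM D U R) (j k : 'I_n) : Prop :=
  j != k /\ ~ exo_indep M j k.

(* Markovian: exogenous arguments of the V_k are mutually independent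
   (each exogenous variable affects at most one generative factor). *)
Definition markovian n (D : 'I_n -> finType) d (U : measurableType d) R
    (M : SCM D U R) : Prop :=
  forall g : forall k : 'I_n, vals D -> D k,
    scm_P M [set u | forall k, resp M k u = g k] =
    (\prod_(k < n) scm_P M [set u | resp M k u = g k])%E.

Definition has_bidir n (D : 'I_n -> finType) d (U : measurableType d) R
    (M : SCM D U R) : Prop :=
  exists j k, bidir M j k.

Definition compatible n (D : 'I_n -> finType) d (U : measurableType d)
    d0 (U0 : measurableType d0) R (M : SCM D U R) (M0 : SCM D U0 R) : Prop :=
  (forall j k, is_arg (scm_f M) j k -> is_arg (scm_f M0) j k) /\
  (forall j k, bidir M j k -> bidir M0 j k).

Definition same_V_law n (D : 'I_n -> finType) d (U : measurableType d)
    d0 (U0 : measurableType d0) R (M : SCM D U R) (M0 : SCM D U0 R) : Prop :=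
  forall v : vals D,
    scm_P M [set u | is_obs M u v] = scm_P M0 [set u | is_obs M0 u v].

Definition ctf_prob n (D : 'I_n -> finType) d (U : measurableType d) R
    (M : SCM D U R) (W X : {set 'I_n}) (x' w w' : vals D) : \bar R :=
  scm_P M [set u | exists v1 v2, is_obs M u v1 /\ is_sol M X x' u v2 /\
                   (forall k, k \in W -> v1 k = w k) /\
                   (forall k, k \in W -> v2 k = w' k)].

Record ASCM (n : nat) (D : 'I_n -> finType) (m : nat) (d : measure_display)
    (U : measurableType d) (R : realType) := MkASCM {
  ascm_scm : SCM D U R;
  ascm_fI : vals D -> U -> m.-tuple R;
  ascm_fI_meas : forall v, measurable_fun setT (ascm_fI v);
  ascm_h : m.-tuple R -> vals D;
  ascm_h_meas : forall v, measurable (ascm_h @^-1` [set v]);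
  ascm_inv : forall v u, ascm_h (ascm_fI v u) = v
}.

Definition same_VI_law n (D : 'I_n -> finType) m d (U : measurableType d)
    d0 (U0 : measurableType d0) R (M : ASCM D m U R) (M0 : ASCM D m U0 R)
    : Prop :=
  forall (v : vals D) (B : set (m.-tuple R)), measurable B ->
    scm_P (ascm_scm M)
      [set u | exists v1, is_obs (ascm_scm M) u v1 /\ v1 = v /\ ascm_fI M v1 u \in B] =
    scm_P (ascm_scm M0)
      [set u | exists v1, is_obs (ascm_scm M0) u v1 /\ v1 = v /\ ascm_fI M0 v1 u \in B].

(* Feature counterfactual query of model M at images i, i' (w.r.t. the
   inverse h* of the image mechanism of M0 = M^* ):
   P^M( h*_W(I) = h*_W(i), h*_W(I_{x'}) = h*_W(i') ). *)
Definition feat_query n (D : 'I_n -> finType) m d (U : measurableType d)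
    d0 (U0 : measurableType d0) R (M0 : ASCM D m U0 R) (M : ASCM D m U R)
    (W X : {set 'I_n}) (x' : vals D) (i i' : m.-tuple R) : \bar R :=
  scm_P (ascm_scm M)
    [set u | exists v1 v2, is_obs (ascm_scm M) u v1 /\
                           is_sol (ascm_scm M) X x' u v2 /\
       (forall k, k \in W -> ascm_h M0 (ascm_fI M v1 u) k = ascm_h M0 i k) /\
       (forall k, k \in W -> ascm_h M0 (ascm_fI M v2 u) k = ascm_h M0 i' k)].

Definition bound_set n (D : 'I_n -> finType) d0 (U0 : measurableType d0) R
    (M0 : SCM D U0 R) (W X : {set 'I_n}) (x' w w' : vals D) : set (\bar R) :=
  [set q | exists (d : measure_display) (U : measurableType d) (M : SCM D U R),
     compatible M M0 /\ same_V_law M M0 /\ q = ctf_prob M W X x' w w'].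

Definition in_opt_bound (R : realType) (q : \bar R) (S : set (\bar R)) : Prop :=
  (ereal_inf S <= q /\ q <= ereal_sup S)%E.

Definition queries_in_bounds n (D : 'I_n -> finType) m d (U : measurableType d)
    d0 (U0 : measurableType d0) R (M0 : ASCM D m U0 R) (M : ASCM D m U R)
    : Prop :=
  forall (W X : {set 'I_n}) (x' : vals D) (i i' : m.-tuple R),
    in_opt_bound (feat_query M0 M W X x' i i')
      (bound_set (ascm_scm M0) W X x' (ascm_h M0 i) (ascm_h M0 i')).

(* Main.v *)
Require Import Defs.
From HB Require Import structures.
From mathcomp Require Import all_boot all_order all_algebra.
From mathcomp Require Import all_classical all_reals all_analysis.
From mathcomp Require Import lra.

Set Implicit Arguments.
Unset Strict Implicit.
Unset Printing Implicit Defensive.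
Import Order.TTheory GRing.Theory Num.Theory.
Local Open Scope classical_set_scope.
Local Open Scope ring_scope.

Section Ex.
Variable R : realType.

Definition D2 : 'I_2 -> finType := fun _ => bool.
Definition o1 : 'I_2 := @Ordinal 2 1 erefl.
Definition vv (x y : bool) : vals D2 := fun k => if k == ord0 then x else y.

Lemma vals_eta (v : vals D2) : v = vv (v ord0) (v o1).
Proof.
apply: functional_extensionality_dep => k; rewrite /vv.
case: ifP => [/eqP -> //|/negbT hk].
have -> : k = o1 by apply/val_inj; case: k hk => -[|[|]] //=.
by [].
Qed.

Definition Pst : probability bool R := bernoulli_prob (2^-1 : R).

Definition fst_ : mechs D2 bool := fun k v u => u.

Lemma fst_meas k (v : vals D2) (a : D2 k) : measurable [set u : bool | fst_ k v u = a].
Proof. by []. Qed.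

Lemma fst_acyc : acyclic fst_.
Proof.
exists (fun _ => 0%N) => j k [v [v' [u [_ H]]]]; exfalso; exact: H.
Qed.

Definition Mst : SCM D2 bool R := MkSCM Pst fst_meas fst_acyc.

Definition code (v : vals D2) : R :=
  if v ord0 then (if v o1 then 3 else 2) else (if v o1 then 1 else 0).

Definition hval (x : R) : vals D2 :=
  if x == 0 then vv false false else if x == 1 then vv false true
  else if x == 2 then vv true false else vv true true.

Definition hst (t : 1.-tuple R) : vals D2 := hval (tnth t ord0).
Definition fIst (v : vals D2) (u : bool) : 1.-tuple R := [tuple code v].

Lemma fIst_meas v : measurable_fun setT (fIst v).
Proof. exact: measurable_cst. Qed.

Lemma hst_inv v u : hst (fIst v u) = v.
Proof.
rewrite /hst /fIst /= (tnth_nth 0) /= [RHS]vals_eta /hval /code.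
case: (v ord0); case: (v o1) => /=.
all: by rewrite ?eqxx ?eqr_nat ?oner_eq0 ?pnatr_eq0 ?pnatr_eq1.
Qed.


Lemma vv_inj a b c d : vv a b = vv c d -> a = c /\ b = d.
Proof. by move=> h; split; [exact: (congr1 (fun f => f ord0) h) | exact: (congr1 (fun f => f o1) h)]. Qed.

Lemma hval_pre w : measurable (hval @^-1` [set w]).
Proof.
rewrite (vals_eta w); case: (w ord0); case: (w o1).
- rewrite (_ : _ @^-1` _ = ~` ([set 0] `|` [set 1] `|` [set 2])).
    by apply: measurableC; apply: measurableU; [apply: measurableU|]; exact: measurable_set1.
  apply/seteqP; split => x /=; rewrite /hval;
  case: (@eqP _ x 0) => ?; case: (@eqP _ x 1) => ?; case: (@eqP _ x 2) => ? => //; try (by move/vv_inj => -[]); intros; (tauto || (exfalso; lra) || (subst; by rewrite ?eqxx ?eqr_nat ?oner_eq0)).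
- rewrite (_ : _ @^-1` _ = [set 2]); first exact: measurable_set1.
  apply/seteqP; split => x /=; rewrite /hval;
  case: (@eqP _ x 0) => ?; case: (@eqP _ x 1) => ?; case: (@eqP _ x 2) => ? => //; try (by move/vv_inj => -[]); intros; (tauto || (exfalso; lra) || (subst; by rewrite ?eqxx ?eqr_nat ?oner_eq0)).
- rewrite (_ : _ @^-1` _ = [set 1]); first exact: measurable_set1.
  apply/seteqP; split => x /=; rewrite /hval;
  case: (@eqP _ x 0) => ?; case: (@eqP _ x 1) => ?; case: (@eqP _ x 2) => ? => //; try (by move/vv_inj => -[]); intros; (tauto || (exfalso; lra) || (subst; by rewrite ?eqxx ?eqr_nat ?oner_eq0)).
- rewrite (_ : _ @^-1` _ = [set 0]); first exact: measurable_set1.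
  apply/seteqP; split => x /=; rewrite /hval;
  case: (@eqP _ x 0) => ?; case: (@eqP _ x 1) => ?; case: (@eqP _ x 2) => ? => //; try (by move/vv_inj => -[]); intros; (tauto || (exfalso; lra) || (subst; by rewrite ?eqxx ?eqr_nat ?oner_eq0)).
Qed.


Lemma hst_meas w : measurable (hst @^-1` [set w]).
Proof.
have := measurable_tnth (T := R) (n := 1) ord0 measurableT (hval_pre w).
by rewrite setTI.
Qed.

Definition Mstar : ASCM D2 1 bool R := MkASCM Mst fIst_meas hst_meas hst_inv.

Lemma p01 : (0 <= (2^-1 : R) <= 1).
Proof. apply/andP; split; lra. Qed.

Lemma Pst_true : Pst [set true] = (2^-1 : R)%:E.
Proof.
rewrite /Pst /= (bernoulli_probE p01) !diracE /=.
by rewrite mem_set// memNset//= -!EFinM -EFinD mulr1 mulr0 addr0.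
Qed.

Lemma Pst_false : Pst [set false] = (2^-1 : R)%:E.
Proof.
rewrite /Pst /= (bernoulli_probE p01) !diracE /=.
rewrite memNset// mem_set//= -!EFinM -EFinD mulr1 mulr0 add0r.
by rewrite /unstable.onem; congr (_%:E); lra.
Qed.


Lemma two_cases (a b : 'I_2) k : a != b -> k = a \/ k = b.
Proof.
case: a b k => [[|[|a]] ha] [[|[|b]] hb] [[|[|k]] hk] //= _;
  by [left; apply/val_inj | right; apply/val_inj].
Qed.

Lemma noarg_indep (U : Type) (f : mechs D2 U) j k :
  ~ is_arg f j k -> forall v v' u, (forall i, i != j -> v i = v' i) -> f k v u = f k v' u.
Proof.
move=> H v v' u hv; case: (f k v u =P f k v' u) => // ne; exfalso; apply: H.
by exists v, v', u.
Qed.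

Lemma noarg_const (U : Type) (f : mechs D2 U) k :
  (forall j, ~ is_arg f j k) -> forall v v' u, f k v u = f k v' u.
Proof.
move=> H v v' u.
pose w : vals D2 := fun i => if i == ord0 then v' i else v i.
have -> : f k v u = f k w u.
  apply: (noarg_indep (H ord0)) => i; rewrite /w => /negbTE -> //.
apply: (noarg_indep (H o1)) => i hi; rewrite /w; case: ifP => // /negbT h0.
move: h0 hi; have [->|->] := two_cases i (isT : ord0 != o1); by rewrite eqxx.
Qed.

Section Hat.
Variables (d : measure_display) (U : measurableType d) (Mh : ASCM D2 1 U R).
Local Notation S := (ascm_scm Mh).
Local Notation f := (scm_f S).
Local Notation P := (scm_P S).
Local Notation fI := (ascm_fI Mh).

Definition fv (v : {ffun 'I_2 -> bool}) : vals D2 := fun k => v k.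

Lemma fvK (v : vals D2) : fv [ffun k => v k] = v.
Proof. by apply: functional_extensionality_dep => k; rewrite /fv ffunE. Qed.

Definition state (u : U) :=
  ([ffun p : 'I_2 * {ffun 'I_2 -> bool} => (f p.1 (fv p.2) u : bool)],
   [ffun v : {ffun 'I_2 -> bool} => [ffun k => (hst (fI (fv v) u) k : bool)]]).

Lemma state_inv u u' : state u = state u' ->
  (forall k v, f k v u = f k v u') /\ (forall v, hst (fI v u) = hst (fI v u')).
Proof.
case=> h1 h2; split.
- move=> k v; have := congr1 (fun F : {ffun 'I_2 * {ffun 'I_2 -> bool} -> bool} => F (k, [ffun i => v i])) h1.
  by rewrite !ffunE /= fvK.
- move=> v; apply: functional_extensionality_dep => k.
  have := congr1 (fun F : {ffun {ffun 'I_2 -> bool} -> {ffun 'I_2 -> bool}} => F [ffun i => v i] k) h2.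
  by rewrite !ffunE fvK.
Qed.

Lemma state_meas x : measurable (state @^-1` [set x]).
Proof.
rewrite (_ : _ @^-1` _ = \bigcap_(p in setT) [set u | f p.1 (fv p.2) u = x.1 p] `&`
   \bigcap_(v in setT) (fI (fv v) @^-1` (hst @^-1` [set fv (x.2 v)]))).
  apply: measurableI; apply: fin_bigcap_measurable; try exact: finite_finset.
  - move=> p _; exact: scm_f_meas.
  - move=> v _; have := ascm_fI_meas Mh (fv v) measurableT (hst_meas (fv (x.2 v))).
    by rewrite setTI.
apply/seteqP; split => u /=.
- move=> <-; split => p _ /=; first by rewrite ffunE.
  by apply: functional_extensionality_dep => k; rewrite /fv !ffunE.
- case: x => x1 x2 /= [h1 h2]; rewrite /state; congr pair.
    by apply/ffunP => p; rewrite ffunE; apply: h1.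
  apply/ffunP => v; apply/ffunP => k; rewrite !ffunE.
  by have /= := congr1 (fun g => g k) (h2 v I).
Qed.

Lemma meas_inv (A : set U) :
  (forall u u', state u = state u' -> A u -> A u') -> measurable A.
Proof.
move=> hA; rewrite (_ : A = \bigcup_(x in state @` A) state @^-1` [set x]).
  apply: fin_bigcup_measurable; first exact: finite_finset.
  move=> x _; exact: state_meas.
apply/seteqP; split => u.
- by move=> Au; exists (state u) => //; exists u.
- by move=> [x [u' Au' <-] /= e]; exact: (hA u' u (esym e) Au').
Qed.

End Hat.


Definition mk (a : 'I_2) (x y : bool) : vals D2 := fun k => if k == a then x else y.

Lemma mk_b a b x y : a != b -> mk a x y b = y.
Proof. by rewrite /mk eq_sym => /negbTE ->. Qed.

Lemma mk_a a x y : mk a x y a = x.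
Proof. by rewrite /mk eqxx. Qed.

Lemma obs_st_same a x : [set u | is_obs Mst u (mk a x x)] = [set x].
Proof.
apply/seteqP; split => u /=.
- by move/(_ a); rewrite mk_a.
- by move=> -> k; rewrite /mk; case: ifP.
Qed.

Lemma obs_st_diff a b : a != b -> [set u | is_obs Mst u (mk a true false)] = set0.
Proof.
move=> ab; apply/seteqP; split => u //=.
by move=> h; move: (h a) (h b); rewrite mk_a mk_b //= /fst_ => <-.
Qed.

Lemma VIset d' (U' : measurableType d') (M : ASCM D2 1 U' R) v :
  [set u | exists v1, is_obs (ascm_scm M) u v1 /\ v1 = v /\ ascm_fI M v1 u \in [set: 1.-tuple R]]
  = [set u | is_obs (ascm_scm M) u v].
Proof.
apply/seteqP; split => u /=.
- by move=> [v1 [ob [<- _]]].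
- by move=> ob; exists v; split => //; split => //; rewrite mem_set.
Qed.

Lemma ctf_compat d' (U' : measurableType d') (M : SCM D2 U' R) (X : {set 'I_2}) a b :
  a != b -> a \in X -> compatible M Mst -> same_V_law M Mst ->
  ctf_prob M [set: 'I_2] X (mk a true false) (mk a false false) (mk a true false)
  = (2^-1 : R)%:E.
Proof.
move=> ab aX [hc _] hs.
have noarg j k : ~ is_arg (scm_f M) j k.
  by move=> /hc [v [v' [u [_ h]]]]; apply: h.
have indep k := noarg_const (fun j => noarg j k).
rewrite /ctf_prob (_ : [set u | _] = [set u | is_obs M u (mk a false false)]).
  by rewrite hs obs_st_same Pst_false.
apply/seteqP; split => u /=.
- move=> [v1 [v2 [ob [s [w1 w2]]]]].
  have -> : mk a false false = v1.
    by apply: functional_extensionality_dep => k; rewrite w1 // inE.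
  exact: ob.
- move=> ob; exists (mk a false false), (mk a true false); split => //.
  split; last by split => k _; rewrite ?mk_a.
  move=> k; case: (two_cases k ab) => ->; first by rewrite aX.
  case: ifP => // _; rewrite (indep b _ (mk a false false)) -ob.
  by rewrite !mk_b.
Qed.


Lemma hval_tf x : hval x = vv true false -> x = 2.
Proof.
rewrite /hval; case: (@eqP _ x 0) => _; first by move/vv_inj => -[].
case: (@eqP _ x 1) => _; first by move/vv_inj => -[].
by case: (@eqP _ x 2) => // _ /vv_inj -[].
Qed.

Lemma hval_ft x : hval x = vv false true -> x = 1.
Proof.
rewrite /hval; case: (@eqP _ x 0) => _; first by move/vv_inj => -[].
case: (@eqP _ x 1) => // _; case: (@eqP _ x 2) => _; by move/vv_inj => -[].
Qed.

Lemma fiber_single a t t' :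
  hst t = mk a true false -> hst t' = mk a true false -> t = t'.
Proof.
have tE (s : 1.-tuple R) : s = [tuple tnth s ord0].
  by apply: eq_from_tnth => i; rewrite (ord1 i) /= (tnth_nth 0) /= (tnth_nth 0).
have [->|->] := two_cases a (isT : ord0 != o1).
- have -> : mk ord0 true false = vv true false by [].
  by rewrite /hst => /hval_tf h /hval_tf h'; rewrite (tE t) (tE t') h h'.
- have -> : mk o1 true false = vv false true.
    by apply: functional_extensionality_dep => k; rewrite /mk /vv;
       have [->|->] := two_cases k (isT : ord0 != o1).
  by rewrite /hst => /hval_ft h /hval_ft h'; rewrite (tE t) (tE t') h h'.
Qed.

Lemma prod2_eq0 (F : 'I_2 -> \bar R) a b : a != b ->
  (\prod_(k < 2) F k = 0)%E -> F a != 0%E -> F b = 0%E.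
Proof.
move=> ab; rewrite (bigD1 a) //= (bigD1 b) 1?eq_sym //= big1 ?mule1.
  move/eqP; rewrite mule_eq0 => /orP [/eqP ->|/eqP ->] //; by rewrite eqxx.
move=> k /andP [ka kb]; exfalso.
by case: (two_cases k ab) => e; rewrite e eqxx in ka kb.
Qed.


Section Core.
Variables (d : measure_display) (U : measurableType d) (Mh : ASCM D2 1 U R) (a b : 'I_2).
Hypotheses (ab : a != b)
  (Ha : forall v v' u, scm_f (ascm_scm Mh) a v u = scm_f (ascm_scm Mh) a v' u)
  (Hb : forall v v' u, v a = v' a -> scm_f (ascm_scm Mh) b v u = scm_f (ascm_scm Mh) b v' u)
  (Hmk : markovian (ascm_scm Mh)) (HVI : same_VI_law Mh Mstar)
  (Hq : queries_in_bounds Mstar Mh).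

Local Notation S := (ascm_scm Mh).
Local Notation f := (scm_f S).
Local Notation P := (scm_P S).
Local Notation fI := (ascm_fI Mh).

Lemma hV v : P [set u | is_obs S u v] = Pst [set u | is_obs Mst u v].
Proof. by have := HVI v measurableT; rewrite !VIset. Qed.

Lemma obs_uniq u v1 v2 : is_obs S u v1 -> is_obs S u v2 -> v1 = v2.
Proof.
move=> o1 o2; have ea : v1 a = v2 a by rewrite o1 o2; apply: Ha.
apply: functional_extensionality_dep => k; case: (two_cases k ab) => -> //.
by rewrite o1 o2; apply: Hb.
Qed.

Definition i0 := fIst (mk a false false) true.
Definition i1 := fIst (mk a true false) true.

Definition Eset (X : {set 'I_2}) := [set u | exists v1 v2, is_obs S u v1 /\
  is_sol S X (mk a true false) u v2 /\
  (forall k, k \in [set: 'I_2]%SET -> hst (fI v1 u) k = hst i0 k) /\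
  (forall k, k \in [set: 'I_2]%SET -> hst (fI v2 u) k = hst i1 k)].

Lemma Eset_meas X : measurable (Eset X).
Proof.
apply: (meas_inv (Mh := Mh)) => u u' /state_inv [Hf Hh] [v1 [v2 [ob [s [w1 w2]]]]].
exists v1, v2; split; [|split; [|split]].
- by move=> k; rewrite -Hf; exact: ob.
- by move=> k; rewrite -Hf; exact: s.
- by move=> k hk; rewrite -Hh; exact: w1.
- by move=> k hk; rewrite -Hh; exact: w2.
Qed.

Lemma Eset_lb (X : {set 'I_2}) : a \in X -> ((2^-1 : R)%:E <= P (Eset X))%E.
Proof.
move=> aX; have [q1 _] := Hq [set: 'I_2]%SET X (mk a true false) i0 i1.
apply: le_trans q1; apply: le_ereal_inf_tmp => y [d' [U' [M [hc [hs ->]]]]].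
by rewrite /= !hst_inv (ctf_compat ab aX hc hs).
Qed.

Definition vtt := mk a true true.

Definition Gset := [set u | exists v1, is_obs S u v1 /\ v1 = vtt /\
  fI v1 u \in hst @^-1` [set vtt]].

Lemma Gset_meas : measurable Gset.
Proof.
apply: (meas_inv (Mh := Mh)) => u u' /state_inv [Hf Hh] [v1 [ob [e m]]].
exists v1; split; first by move=> k; rewrite -Hf; exact: ob.
split => //; rewrite in_setE /= in m; by rewrite in_setE /= -Hh.
Qed.

Lemma Gset_P : P Gset = (2^-1 : R)%:E.
Proof.
rewrite (HVI vtt (hst_meas vtt)) -Pst_true; congr (Pst _).
apply/seteqP; split => u /=.
- move=> [v1 [ob [e _]]]; subst v1.
  by have := ob; rewrite -[is_obs _ u _]/([set u | is_obs Mst u vtt] u) obs_st_same.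
- move=> ->; exists vtt; split.
    by rewrite -[is_obs _ _ _]/([set u | is_obs Mst u vtt] true) obs_st_same.
  by split => //; rewrite in_setE /= hst_inv.
Qed.

Lemma disj X : Eset X `&` Gset = set0.
Proof.
apply/seteqP; split => u //= [[v1 [v2 [ob [_ [w1 _]]]]] [v1' [ob' [e m]]]].
have ev := obs_uniq ob ob'; subst v1 v1'.
rewrite in_setE /= in m; have := w1 a; rewrite m inE /i0 hst_inv /vtt !mk_a.
by move=> /(_ isT).
Qed.

Definition Zset := [set u | f b vtt u = false].

Lemma Zset_meas : measurable Zset.
Proof. exact: scm_f_meas. Qed.

Lemma EEZ : Eset [set a] `&` Eset [set: 'I_2]%SET `<=` Zset.
Proof.
move=> u [[v1 [v2 [ob [s [w1 w2]]]]] [v1' [v2' [ob' [s' [w1' w2']]]]]].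
rewrite /Zset /=; case hz: (f b vtt u) => //; exfalso.
have e2' : v2' = mk a true false.
  by apply: functional_extensionality_dep => k; rewrite s' inE.
have e2a : v2 a = true by rewrite s inE eqxx mk_a.
have e2 : v2 = vtt.
  apply: functional_extensionality_dep => k; case: (two_cases k ab) => ->.
    by rewrite e2a /vtt mk_a.
  rewrite s inE eq_sym (negbTE ab) (Hb (v' := vtt)) ?hz; last by rewrite e2a /vtt mk_a.
  by rewrite /vtt mk_b.
rewrite e2 in w2; rewrite e2' in w2'.
have h1 : hst (fI vtt u) = mk a true false.
  apply: functional_extensionality_dep => k; rewrite w2 ?inE //.
  by rewrite /i1 hst_inv.
have h2 : hst (fI (mk a true false) u) = mk a true false.
  apply: functional_extensionality_dep => k; rewrite w2' ?inE //.
  by rewrite /i1 hst_inv.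
have := fiber_single h1 h2 => /(congr1 (ascm_h Mh)); rewrite !ascm_inv.
by move=> /(congr1 (fun v => v b)); rewrite /vtt !mk_b.
Qed.

Definition gx (x : bool) : forall k : 'I_2, vals D2 -> D2 k :=
  fun k => if k == a then (fun _ => true) else (fun v => if v a then false else x).

Lemma resp_inv u u' : state Mh u = state Mh u' -> forall k, resp S k u = resp S k u'.
Proof.
move=> /state_inv [Hf _] k; apply: boolp.funext => v.
by rewrite /resp Hf.
Qed.

Lemma Mx_meas x : measurable [set u | forall k, resp S k u = gx x k].
Proof.
apply: (meas_inv (Mh := Mh)) => u u' hs h k; by rewrite -(resp_inv hs).
Qed.

Lemma Rk_meas x k : measurable [set u | resp S k u = gx x k].
Proof.
apply: (meas_inv (Mh := Mh)) => u u' hs /= h; by rewrite /= -(resp_inv hs).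
Qed.

Lemma obs_meas v : measurable [set u | is_obs S u v].
Proof.
apply: (meas_inv (Mh := Mh)) => u u' /state_inv [Hf _] h k; by rewrite -Hf.
Qed.

Lemma Mx_P x : P [set u | forall k, resp S k u = gx x k] = 0%E.
Proof.
apply/eqP; rewrite -measure_le0.
have <- : P [set u | is_obs S u (mk a true false)] = 0%E.
  by rewrite hV (obs_st_diff ab) measure0.
apply: le_measure; rewrite ?inE; [exact: Mx_meas|exact: obs_meas|].
move=> u /= h k; case: (two_cases k ab) => ->.
- by rewrite mk_a; have := congr1 (fun g => g (mk a true false)) (h a); rewrite /gx eqxx.
- rewrite mk_b //; have := congr1 (fun g => g (mk a true false)) (h b).
  by rewrite /gx eq_sym (negbTE ab) mk_a.
Qed.

Lemma Ra_pos x : P [set u | resp S a u = gx x a] != 0%E.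
Proof.
have : ((2^-1 : R)%:E <= P [set u | resp S a u = gx x a])%E.
  rewrite -Pst_true -(obs_st_same a true) -hV.
  apply: le_measure; rewrite ?inE; [exact: obs_meas|exact: Rk_meas|].
  move=> u /= ob; rewrite /gx eqxx; apply: boolp.funext => v.
  by rewrite /resp (Ha v (mk a true true)) -ob mk_a.
by apply: contraTneq => ->; rewrite lee_fin; lra.
Qed.

Lemma Rb_P x : P [set u | resp S b u = gx x b] = 0%E.
Proof.
apply: (prod2_eq0 (F := fun k => P [set u | resp S k u = gx x k]) ab); last exact: Ra_pos.
by rewrite -Hmk Mx_P.
Qed.

Lemma Zset_P : P Zset = 0%E.
Proof.
apply/eqP; rewrite -measure_le0.
apply: (@le_trans _ _ (P ([set u | resp S b u = gx false b] `|` [set u | resp S b u = gx true b]))).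
  apply: le_measure; rewrite ?inE; [exact: Zset_meas|apply: measurableU; exact: Rk_meas|].
  move=> u /= hz.
  have E : resp S b u = gx (f b (mk a false false) u) b.
    apply: boolp.funext => v; rewrite /resp /gx eq_sym (negbTE ab).
    case hv: (v a).
      by rewrite (Hb (v' := vtt)) // /vtt mk_a.
    by rewrite (Hb (v' := mk a false false)) // mk_a.
  by case: (f b (mk a false false) u) E => E; [right|left].
apply: le_trans (measureU2 _ (Rk_meas false b) (Rk_meas true b)) _.
apply: (@le_trans _ _ (0 + 0)%E); last by rewrite adde0.
by apply: leeD; rewrite measure_le0; apply/eqP; [exact: (Rb_P false)|exact: (Rb_P true)].
Qed.

Lemma core_false : False.
Proof.
pose E1 := Eset [set a]; pose E2 := Eset [set: 'I_2]%SET.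
have m1 : measurable E1 := Eset_meas _.
have m2 : measurable E2 := Eset_meas _.
have l1 : ((2^-1 : R)%:E <= P E1)%E by apply: Eset_lb; rewrite inE eqxx.
have l2 : ((2^-1 : R)%:E <= P E2)%E by apply: Eset_lb; rewrite inE.
have mG := Gset_meas.
have m12 : measurable (E1 `&` E2) := measurableI _ _ m1 m2.
have mD : measurable (E2 `\` E1) := measurableD m2 m1.
have hI : P (E1 `&` E2) = 0%E.
  apply/eqP; rewrite -measure_le0 -Zset_P.
  apply: le_measure; rewrite ?inE; [exact: m12|exact: Zset_meas|exact: EEZ].
have hU : (P ((E2 `\` E1) `|` (E1 `&` E2)) <= P (E2 `\` E1) + P (E1 `&` E2))%E :=
  measureU2 _ mD m12.
have hS : (P E2 <= P ((E2 `\` E1) `|` (E1 `&` E2)))%E.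
  apply: le_measure; rewrite ?inE; [exact: m2|exact: measurableU|].
  move=> u e2; case: (pselect (E1 u)) => h; [by right|by left].
have hD : (P E2 <= P (E2 `\` E1))%E.
  by apply: (le_trans hS); apply: (le_trans hU); rewrite hI adde0.
have mA : measurable (E1 `|` (E2 `\` E1)) := measurableU _ _ m1 mD.
have dA : E1 `&` (E2 `\` E1) = set0.
  by apply/seteqP; split => u // [h1 [_ n1]].
have dG : (E1 `|` (E2 `\` E1)) `&` Gset = set0.
  apply/seteqP; split => u // [[h|[h _]] g].
  - by have /seteqP [+ _] := disj [set a]; apply; split.
  - by have /seteqP [+ _] := disj [set: 'I_2]%SET; apply; split.
have eA : P (E1 `|` (E2 `\` E1)) = (P E1 + P (E2 `\` E1))%E by apply: measureU.
have eT : P ((E1 `|` (E2 `\` E1)) `|` Gset) = (P (E1 `|` (E2 `\` E1)) + P Gset)%E by apply: measureU.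
have hT : (P ((E1 `|` (E2 `\` E1)) `|` Gset) <= 1)%E :=
  probability_le1 _ (measurableU _ _ mA mG).
rewrite eT eA Gset_P in hT.
have : (((2^-1 : R) + 2^-1 + 2^-1)%:E <= 1)%E.
  apply: le_trans hT; rewrite !EFinD; apply: leeD => //; apply: leeD => //.
  exact: le_trans hD.
by rewrite lee_fin; lra.
Qed.

End Core.

Lemma Mst_bidir : has_bidir Mst.
Proof.
exists ord0, o1; split => // h.
have E (k : 'I_2) : [set u | resp Mst k u = (fun _ => true)] = [set true].
  apply/seteqP; split => u /=.
  - by move/(congr1 (fun g => g (vv true true))).
  - by move=> ->.
have := h (fun _ => true) (fun _ => true).
rewrite (_ : [set u | _ /\ _] = [set true]); last first.
  apply/seteqP; split => u /=.
  - by case=> /(congr1 (fun g => g (vv true true))).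
  - by move=> ->.
rewrite -[X in _ = (X * _)%E]/(Pst [set u | resp Mst ord0 u = (fun _ => true)]).
rewrite -[X in _ = (_ * X)%E]/(Pst [set u | resp Mst o1 u = (fun _ => true)]).
rewrite !E Pst_true -EFinM => /eqP; rewrite eqe => /eqP; lra.
Qed.

Lemma final d (U : measurableType d) (Mh : ASCM D2 1 U R) :
  markovian (ascm_scm Mh) -> same_VI_law Mh Mstar -> queries_in_bounds Mstar Mh -> False.
Proof.
move=> Hmk HVI Hq; have [rk hrk] := scm_acyclic (ascm_scm Mh).
have self k : ~ is_arg (scm_f (ascm_scm Mh)) k k by move/hrk; rewrite ltnn.
case: (leqP (rk ord0) (rk o1)) => h.
- have Ha : forall (v v' : vals D2) u,
      scm_f (ascm_scm Mh) ord0 v u = scm_f (ascm_scm Mh) ord0 v' u.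
    move=> v v' u; apply: noarg_const => j.
    by case: (two_cases j (isT : ord0 != o1)) => -> // /hrk; rewrite ltnNge h.
  have Hb : forall (v v' : vals D2) u, v ord0 = v' ord0 ->
      scm_f (ascm_scm Mh) o1 v u = scm_f (ascm_scm Mh) o1 v' u.
    move=> v v' u e; apply: (noarg_indep (self o1)) => i hi.
    by case: (two_cases i (isT : ord0 != o1)) hi => -> //; rewrite eqxx.
  exact: (core_false (isT : ord0 != o1) Ha Hb Hmk HVI Hq).
- have Ha : forall (v v' : vals D2) u,
      scm_f (ascm_scm Mh) o1 v u = scm_f (ascm_scm Mh) o1 v' u.
    move=> v v' u; apply: noarg_const => j.
    by case: (two_cases j (isT : ord0 != o1)) => -> // /hrk; rewrite ltnNge (ltnW h).
  have Hb : forall (v v' : vals D2) u, v o1 = v' o1 ->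
      scm_f (ascm_scm Mh) ord0 v u = scm_f (ascm_scm Mh) ord0 v' u.
    move=> v v' u e; apply: (noarg_indep (self ord0)) => i hi.
    by case: (two_cases i (isT : ord0 != o1)) hi => -> //; rewrite eqxx.
  exact: (core_false (isT : o1 != ord0) Ha Hb Hmk HVI Hq).
Qed.

End Ex.

Theorem proposition3 (R : realType) :
  exists (n : nat) (D : 'I_n -> finType) (m : nat)
         (d0 : measure_display) (U0 : measurableType d0) (Mstar : ASCM D m U0 R),
    has_bidir (ascm_scm Mstar) /\
    forall (d : measure_display) (U : measurableType d) (Mhat : ASCM D m U R),
      markovian (ascm_scm Mhat) ->
      ~ (same_VI_law Mhat Mstar /\ queries_in_bounds Mstar Mhat).
Proof.
exists 2%N, D2, 1%N, default_measure_display, bool, (Mstar R); split.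
  exact: Mst_bidir.
by move=> d U Mh Hmk [HVI Hq]; exact: (final Hmk HVI Hq).
Qed.
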